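(* Let $\mathcal{M}$ be a $W^*$-algebra, $p\in\mathcal{M}$ a projection and $u\in\mathcal{M}$ a unitary. The set $\mathcal{S}_{\langle p,u\rangle}$ of all finite products of $p$, $u$ and $u^*$ is an inverse semigroup if and only if $[p,u^kpu^{*k}]=0$ for all $k\in\mathbb{N}$.
   Context: $[a,b]=ab-ba$. An inverse semigroup is a semigroup in which each $s$ has a unique $t$ with $sts=s$, $tst=t$. *)

(* Defs.v *)
From HB Require Import structures.
From mathcomp Require Import all_boot all_order all_algebra.
From mathcomp Require Import complex.
Set Implicit Arguments. Unset Strict Implicit. Unset Printing Implicit Defensive.
Import Order.TTheory GRing.Theory Num.Theory.
Local Open Scope ring_scope.

Definition star_algebra (R : rcfType) (M : lalgType (complex R)) (adj : M -> M) : Prop :=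
  [/\ involutive adj,
      forall x y : M, adj (x + y) = adj x + adj y,
      forall (a : complex R) (x : M), adj (a *: x) = (a^*)%C *: adj x,
      forall x y : M, adj (x * y) = adj y * adj x
    & adj 1 = 1].

Definition projection_elt (M : nzRingType) (adj : M -> M) (p : M) : Prop :=
  p * p = p /\ adj p = p.

Definition unitary_elt (M : nzRingType) (adj : M -> M) (u : M) : Prop :=
  u * adj u = 1 /\ adj u * u = 1.

Definition ring_commutator (M : nzRingType) (a b : M) : M := a * b - b * a.

Definition gen_semigroup (M : nzRingType) (adj : M -> M) (p u : M) : M -> Prop :=
  fun x => exists w : seq M,
    [/\ (0 < size w)%N, {subset w <= [:: p; u; adj u]} & x = \prod_(y <- w) y].

Definition inverse_semigroup (M : nzRingType) (S : M -> Prop) : Prop :=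
  (forall x y, S x -> S y -> S (x * y)) /\
  (forall s, S s -> exists! t, S t /\ s * t * s = s /\ t * s * t = t).

(* Main.v *)
Require Import Defs.
From mathcomp Require Import all_boot all_order all_algebra.
From mathcomp Require Import complex.
Import GRing.Theory.
Local Open Scope ring_scope.
Set Warnings "-notation-overridden -ambiguous-paths".

Theorem proposition3p9 (R : rcfType) (M : lalgType (complex R)) (adj : M -> M)
  (hstar : star_algebra adj) (p u : M)
  (hp : projection_elt adj p) (hu : unitary_elt adj u) :
  inverse_semigroup (gen_semigroup adj p u) <->
  (forall k : nat, ring_commutator p (u ^+ k * p * adj u ^+ k) = 0).
Proof.
case: hstar => adjK adjD adjZ adjM adj1.
case: hp => pp adjp; case: hu => uu' u'u.
set S := gen_semigroup adj p u.
have Smul : forall x y, S x -> S y -> S (x * y).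
  move=> x y [w1 [s1 sub1 ->]] [w2 [s2 sub2 ->]].
  exists (w1 ++ w2); split; first by rewrite size_cat addn_gt0 s1.
    by move=> z; rewrite mem_cat => /orP [/sub1|/sub2].
  by rewrite big_cat.
have Sp : S p by exists [:: p]; split => //; [move=> z; rewrite inE => /eqP ->; rewrite !inE eqxx | rewrite big_seq1].
have Su : S u by exists [:: u]; split => //; [move=> z; rewrite inE => /eqP ->; rewrite !inE eqxx orbT | rewrite big_seq1].
have Su' : S (adj u) by exists [:: adj u]; split => //; [move=> z; rewrite inE => /eqP ->; rewrite !inE eqxx !orbT | rewrite big_seq1].
have comm0 : forall a b : M, ring_commutator a b = 0 <-> a * b = b * a.
  move=> a b; rewrite /ring_commutator; split => [/eqP|->]; last by rewrite subrr.
  by rewrite subr_eq0 => /eqP.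
have uk1 : forall n, u ^+ n * adj u ^+ n = 1.
  by move=> n; rewrite -exprMn_comm ?uu' ?expr1n // /GRing.comm uu' u'u.
have uk2 : forall n, adj u ^+ n * u ^+ n = 1.
  by move=> n; rewrite -exprMn_comm ?u'u ?expr1n // /GRing.comm uu' u'u.
have canc : forall a b : M, a * b = 1 -> forall x, x * a * b = x.
  by move=> a b h x; rewrite -mulrA h mulr1.
have canc2 : forall a : M, a * a = a -> forall x, x * a * a = x * a.
  by move=> a h x; rewrite -mulrA h.
have adjX : forall (x : M) n, adj (x ^+ n) = adj x ^+ n.
  move=> x; elim=> [|n IH]; first by rewrite !expr0 adj1.
  by rewrite exprS adjM IH exprSr.
split.
- case=> _ Hinv k; apply/comm0.
  have Sq : S (u ^+ k * p * adj u ^+ k).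
    elim: k => [|k IH]; first by rewrite !expr0 mul1r mulr1.
    rewrite exprS exprSr !mulrA.
    apply: (Smul) => //.
    rewrite -!mulrA.
    apply: (Smul) => //.
    by rewrite mulrA.
  have uniq : forall s t1 t2, S s -> S t1 -> S t2 -> s * t1*s = s -> t1*s * t1 = t1 ->
      s * t2*s = s -> t2*s * t2 = t2 -> t1 = t2.
    move=> s t1 t2 Ss S1 S2 a1 b1 a2 b2; case: (Hinv s Ss) => t [_ Ht].
    by rewrite -(Ht t1) ?(Ht t2).
  have idem : forall e f, S e -> S f -> e * e = e -> f * f = f -> (e * f) * (e * f) = e * f.
    move=> e f Se Sf ee ff.
    have Sa : S (e * f) by apply: (Smul).
    case: (Hinv _ Sa) => b [[Sb [h1 h2]] _].
    have h3 : f * b * e * f * b * e = f * b * e.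
      by have := congr1 (fun x => f * x * e) h2; rewrite /= !mulrA.
    have bE : b = f * b * e.
      apply: (uniq (e * f)) => //; first by apply: (Smul) => //; apply: (Smul).
        by rewrite !mulrA -[e * f * f]mulrA ff -[e * f * b * e * e]mulrA ee -[RHS]h1 !mulrA.
      by rewrite !mulrA -[f * b * e * e]mulrA ee -[f * b * e * f * f]mulrA ff.
    have bb : b * b = b.
      by rewrite {1 2}bE !mulrA h3 -bE.
    have -> : e * f = b.
      apply: (uniq b) => //; by rewrite bb ?bb.
    exact: bb.
  have qq : (u ^+ k * p * adj u ^+ k) * (u ^+ k * p * adj u ^+ k) = u ^+ k * p * adj u ^+ k.
    by rewrite !mulrA -[u ^+ k * p * adj u ^+ k * u ^+ k]mulrA uk2 mulr1 -[u ^+ k * p * p]mulrA pp.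
  move: Sq qq; set q := u ^+ k * p * adj u ^+ k => Sq qq.
  clearbody q.
  have ef := idem p q Sp Sq pp qq; have fe := idem q p Sq Sp qq pp.
  apply: (uniq (p * q)); try by apply: (Smul).
  - by rewrite !ef.
  - by rewrite !ef.
  - by rewrite !mulrA -[p * q * q]mulrA qq -[p * q * p * p]mulrA pp -[RHS]ef !mulrA.
  - by rewrite !mulrA -[q * p * p]mulrA pp -[q * p * q * q]mulrA qq -[RHS]fe !mulrA.
- move=> Hk.
  have Hc : forall k, p * (u ^+ k * p * adj u ^+ k) = (u ^+ k * p * adj u ^+ k) * p.
    by move=> k; apply/comm0.
  have Hc' : forall k, p * (adj u ^+ k * p * u ^+ k) = (adj u ^+ k * p * u ^+ k) * p.
    move=> k; have := congr1 (fun x => adj u ^+ k * x * u ^+ k) (Hc k).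
    by rewrite /= !mulrA ?uk2 ?(canc _ _ (uk2 k)) mul1r => ->.
  have red : forall m n, exists k, u ^+ n * adj u ^+ m = u ^+ k \/ u ^+ n * adj u ^+ m = adj u ^+ k.
    elim=> [|m IH] n; first by exists n; left; rewrite expr0 mulr1.
    case: n => [|n]; first by exists m.+1; right; rewrite expr0 mul1r.
    by rewrite exprSr exprS mulrA (canc _ _ uu').
  pose G := fun v : M => exists n m, v = u ^+ n * adj u ^+ m.
  have comm_pow : forall n m, adj u ^+ m * u ^+ n = u ^+ n * adj u ^+ m.
    move=> n m; apply/commrX/commr_sym/commrX; by rewrite /GRing.comm uu' u'u.
  have G1 : G 1 by exists 0%N, 0%N; rewrite !expr0 mulr1.
  have Gu : G u by exists 1%N, 0%N; rewrite expr1 expr0 mulr1.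
  have Gu' : G (adj u) by exists 0%N, 1%N; rewrite expr1 expr0 mul1r.
  have Gm : forall v w, G v -> G w -> G (v * w).
    move=> v w [n [m ->]] [n' [m' ->]]; exists (n + n')%N, (m + m')%N.
    by rewrite !exprD mulrA -(mulrA _ (adj u ^+ m)) comm_pow !mulrA.
  have Gadj : forall v, G v -> G (adj v) /\ v * adj v = 1 /\ adj v * v = 1.
    move=> v [n [m ->]]; rewrite adjM !adjX adjK; split; first by exists m, n.
    split; rewrite !mulrA.
      by rewrite (canc _ _ (uk2 m)) uk1.
    by rewrite (canc _ _ (uk2 n)) uk1.
  have GP : forall w, G w -> p * (w * p * adj w) = (w * p * adj w) * p.
    move=> w [n [m ->]]; have [k [->|->]] := red m n.
      by rewrite adjX; exact: Hc.
    by rewrite adjX adjK; exact: Hc'.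
  pose Q := fun q : M => exists v, G v /\ q = v * p * adj v.
  have Qp : Q p by exists 1; split => //; rewrite adj1 mulr1 mul1r.
  have Qconj : forall v q, G v -> Q q -> Q (v * q * adj v).
    move=> v q Gv [w [Gw ->]]; exists (v * w); split; first exact: Gm.
    by rewrite adjM !mulrA.
  have Qadj : forall q, Q q -> adj q = q by move=> q [v [_ ->]]; rewrite !adjM adjK adjp mulrA.
  have Qidem : forall q, Q q -> q * q = q.
    move=> q [v [Gv ->]]; have [_ [_ h]] := Gadj v Gv.
    by rewrite !mulrA (canc _ _ h) (canc2 _ pp).
  have Qcomm : forall q1 q2, Q q1 -> Q q2 -> q1 * q2 = q2 * q1.
    move=> q1 q2 [v1 [G1' ->]] [v2 [G2 ->]].
    have [Ga [h1 h2]] := Gadj v1 G1'.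
    have Gw : G (adj v1 * v2) by apply: Gm.
    have e2 : v2 = v1 * (adj v1 * v2) by rewrite mulrA h1 mul1r.
    move: Gw e2; move: (adj v1 * v2) => w Gw ->.
    rewrite adjM.
    have := congr1 (fun x => v1 * x * adj v1) (GP w Gw).
    by rewrite /= !mulrA !(canc _ _ h2) => ->.
  pose F := fun f : M => exists l : seq M, (forall x, x \in l -> Q x) /\ f = \prod_(x <- l) x.
  have F1 : F 1 by exists [::]; rewrite big_nil.
  have FQ : forall q, Q q -> F q.
    move=> q Qq; exists [:: q]; split; last by rewrite big_seq1.
    by move=> x; rewrite inE => /eqP ->.
  have Fm : forall f g, F f -> F g -> F (f * g).
    move=> f g [l1 [h1 ->]] [l2 [h2 ->]]; exists (l1 ++ l2); split; last by rewrite big_cat.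
    by move=> x; rewrite mem_cat => /orP [/h1|/h2].
  have FQc : forall q f, Q q -> F f -> q * f = f * q.
    move=> q f Qq [l [hl ->]]; elim: l hl => [|x l IH] hl; first by rewrite big_nil mul1r mulr1.
    rewrite big_cons mulrA (Qcomm q x) //; last by apply: hl; rewrite inE eqxx.
    rewrite -mulrA IH; last by move=> y hy; apply: hl; rewrite inE hy orbT.
    by rewrite mulrA.
  have Fcomm : forall f g, F f -> F g -> f * g = g * f.
    move=> f g [l [hl ef]] Fg; rewrite {}ef; elim: l hl => [|x l IH] hl; first by rewrite big_nil mul1r mulr1.
    rewrite big_cons -mulrA IH; last by move=> y hy; apply: hl; rewrite inE hy orbT.
    by rewrite !mulrA (FQc x g) //; apply: hl; rewrite inE eqxx.
  have Fproj : forall f, F f -> f * f = f /\ adj f = f.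
    move=> f [l [hl ->]]; elim: l hl => [|x l IH] hl; first by rewrite big_nil mulr1 adj1.
    have hl' : forall y, y \in l -> Q y by move=> y hy; apply: hl; rewrite inE hy orbT.
    have Qx : Q x by apply: hl; rewrite inE eqxx.
    have FP : F (\prod_(y <- l) y) by exists l.
    have e := FQc x _ Qx FP.
    have [IH1 IH2] := IH hl'.
    rewrite big_cons; split.
      by rewrite -mulrA [\prod_(y <- l) y * _]mulrA -e -mulrA IH1 mulrA Qidem.
    by rewrite adjM IH2 Qadj // e.
  have Fconj : forall v f, G v -> F f -> F (v * f * adj v).
    move=> v f Gv [l [hl ->]]; have [_ [h1 h2]] := Gadj v Gv.
    elim: l hl => [|x l IH] hl; first by rewrite big_nil mulr1 h1.
    rewrite big_cons.
    have -> : v * (x * \prod_(y <- l) y) * adj v = (v * x * adj v) * (v * (\prod_(y <- l) y) * adj v).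
      by rewrite !mulrA (canc _ _ h2).
    apply: Fm; first by apply: FQ; apply: Qconj => //; apply: hl; rewrite inE eqxx.
    by apply: IH => y hy; apply: hl; rewrite inE hy orbT.
  have dec : forall w : seq M, {subset w <= [:: p; u; adj u]} ->
      exists f v, [/\ F f, G v & \prod_(y <- w) y = f * v].
    elim=> [|y w IH] sub; first by exists 1, 1; rewrite big_nil mulr1.
    have subw : {subset w <= [:: p; u; adj u]} by move=> z hz; apply: sub; rewrite inE hz orbT.
    have [f [v [Ff Gv e]]] := IH subw; rewrite big_cons e.
    have : y \in [:: p; u; adj u] by apply: sub; rewrite inE eqxx.
    rewrite !inE => /or3P [/eqP->|/eqP->|/eqP->].
    + exists (p * f), v; split => //; last by rewrite mulrA.
      by apply: Fm => //; exact: FQ.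
    + exists (u * f * adj u), (u * v); split; [exact: Fconj | exact: Gm | by rewrite !mulrA (canc _ _ u'u)].
    + exists (adj u * f * u), (adj u * v); split; [ | exact: Gm | by rewrite !mulrA (canc _ _ uu')].
      by have := Fconj (adj u) f Gu' Ff; rewrite adjK.
  have Sdec : forall s, S s -> exists f v, [/\ F f, G v & s = f * v].
    by move=> s [w [_ sub ->]]; exact: dec.
  have S1 : S 1 by rewrite -uu'; apply: (Smul).
  have Sadj : forall s, S s -> S (adj s).
    move=> s [w [_ sub ->]]; elim: w sub => [|y w IH] sub; first by rewrite big_nil adj1.
    rewrite big_cons adjM; apply: (Smul); first by apply: IH => z hz; apply: sub; rewrite inE hz orbT.
    have : y \in [:: p; u; adj u] by apply: sub; rewrite inE eqxx.
    by rewrite !inE => /or3P [/eqP->|/eqP->|/eqP->]; rewrite ?adjp ?adjK.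
  have IdS : forall x, S x -> x * x = x -> F x.
    move=> x Sx xx; have [f [v [Ff Gv ex]]] := Sdec x Sx.
    have [_ [h1 h2]] := Gadj v Gv.
    have [ff adjf] := Fproj f Ff.
    have e : f * v * f = f.
      have := congr1 (fun y => y * adj v) xx.
      by rewrite /= ex !mulrA !(canc _ _ h1) => ->.
    have Fg : F (f * (v * f * adj v)) by apply: Fm => //; exact: Fconj.
    have fE : f = (f * (v * f * adj v)) * v by rewrite !mulrA (canc _ _ h2) e.
    move: Fg fE; move: (f * (v * f * adj v)) => g Fg fE.
    have [gg adjg] := Fproj g Fg.
    have fg : f = g.
      transitivity (f * adj f); first by rewrite adjf ff.
      by rewrite fE adjM adjg !mulrA (canc _ _ h1) gg.
    rewrite ex; have -> : f * v = f by rewrite {2}fE fg.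
    exact: Ff.
  have idc : forall x y, S x -> S y -> x * x = x -> y * y = y -> x * y = y * x.
    by move=> x y Sx Sy xx yy; apply: Fcomm; apply: IdS.
  split; first exact: Smul.
  move=> s Ss; exists (adj s).
  have [f [v [Ff Gv es]]] := Sdec s Ss; have [_ [h1 h2]] := Gadj v Gv.
  have [ff adjf] := Fproj f Ff.
  have a1 : s * adj s * s = s.
    by rewrite es adjM adjf !mulrA (canc _ _ h1) (canc2 _ ff) ff.
  have b1 : adj s * s * adj s = adj s.
    by rewrite es adjM adjf !mulrA (canc _ _ h1) !(canc2 _ ff).
  have St1 := Sadj s Ss.
  split; first by split.
  move: (adj s) St1 a1 b1 => t1 St1 a1 b1.
  move=> t [St [a2 b2]].
  have A : (t1 * s) * (t * s) = (t * s) * (t1 * s).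
    apply: idc; try (apply: (Smul) => //); by rewrite mulrA ?b1 ?b2.
  have B : (s * t1) * (s * t) = (s * t) * (s * t1).
    apply: idc; try (apply: (Smul) => //); by rewrite mulrA ?a1 ?a2.
  have e1 : t1 = t * s * t1.
    transitivity (t1 * s * t1); first by rewrite b1.
    transitivity (t1 * (s * t * s) * t1); first by rewrite a2.
    transitivity (t * s * (t1 * s * t1)); last by rewrite b1.
    have := congr1 (fun x => x * t1) A; by rewrite /= !mulrA.
  have e2 : t = t * s * t1.
    transitivity (t * s * t); first by rewrite b2.
    transitivity (t * (s * t1 * s) * t); first by rewrite a1.
    transitivity ((t * s * t) * s * t1); last by rewrite b2.
    have := congr1 (fun x => t * x) B; by rewrite /= !mulrA.
  by rewrite e1 -e2.
Qed.
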